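(* Let $N\ge3$, $\frac{N}{N-1}<p<2$, $\xi=(p-1)(N-1)$, $\beta=\frac{p-1}{\xi-1}$, $\sigma=\frac{2-p}{p-1}$. There is a constant $C>0$ such that for every $t>0$ and every function $b$ on $(0,1]$ with $\sup_{0<r\le1}r^{\sigma+2}|b(r)|\le 1$, there is a solution $a_t$ of \[ -a_t''(r)-\frac{(N-1)a_t'(r)}{r}+\frac{p\,a_t'(r)}{\beta r+tr^{\xi}}=b(r),\quad 0<r<1,\qquad a_t(1)=0, \] satisfying $\sup_{0<r\le1}\{r^{\sigma}|a_t(r)|+r^{\sigma+1}|a_t'(r)|\}\le C$. *)

(* Defs.v *)
From Stdlib Require Import Reals Lra.
Open Scope R_scope.

Definition left_continuous_at (f : R -> R) (x : R) : Prop :=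
  forall eps, 0 < eps -> exists delta, 0 < delta /\
    forall r, x - delta < r < x -> Rabs (f r - f x) < eps.

Definition continuous_on_0_1 (f : R -> R) : Prop :=
  forall x, 0 < x <= 1 -> forall eps, 0 < eps -> exists delta, 0 < delta /\
    forall r, 0 < r <= 1 -> Rabs (r - x) < delta -> Rabs (f r - f x) < eps.

Definition xi_of (N : nat) (p : R) : R := (p - 1) * (INR N - 1).
Definition beta_of (N : nat) (p : R) : R := (p - 1) / (xi_of N p - 1).
Definition sigma_of (p : R) : R := (2 - p) / (p - 1).

(* a (with derivative da) is a classical solution of
   -a'' - (N-1) a'/r + p a'/(beta r + t r^xi) = b  on (0,1),  a(1) = 0,
   where a and a' are left-continuous at 1 (so a'(1) = da 1 is the
   one-sided limit and the boundary condition is meaningful). *)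
Definition is_solution (N : nat) (p t : R) (b a da : R -> R) : Prop :=
  (forall r, 0 < r < 1 ->
     derivable_pt_lim a r (da r) /\
     exists d2, derivable_pt_lim da r d2 /\
       - d2 - (INR N - 1) * da r / r
         + p * da r / (beta_of N p * r + t * Rpower r (xi_of N p)) = b r)
  /\ a 1 = 0
  /\ left_continuous_at a 1
  /\ left_continuous_at da 1.

(* Main.v *)
Require Import Defs.
From Coquelicot Require Import Coquelicot.
From Stdlib Require Import Reals Lra.
Open Scope R_scope.


Lemma exp_le_mono x y : x <= y -> exp x <= exp y.
Proof. intros [H|H]. left; now apply exp_increasing. right; now subst. Qed.

Lemma int_pow_bound (f : R->R) (a b c al : R) : 0 < a <= b -> 0 <= c -> al + 1 <> 0 ->
  ex_RInt f a b -> (forall s, a <= s <= b -> Rabs (f s) <= c * exp (al * ln s)) ->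
  Rabs (RInt f a b) <= c * (exp ((al+1)*ln b) - exp ((al+1)*ln a)) / (al+1).
Proof.
  intros Hab Hc Hal Hf Hb.
  set (g := fun s => c * exp (al * ln s)).
  set (F := fun s => c * exp ((al+1) * ln s) / (al+1)).
  assert (Hmin : Rmin a b = a) by (apply Rmin_left; lra).
  assert (Hmax : Rmax a b = b) by (apply Rmax_right; lra).
  assert (Hg : is_RInt g a b (F b - F a)).
  { apply (is_RInt_derive F g).
    - intros x Hx. rewrite Hmin, Hmax in Hx.
      unfold F, g. auto_derive; try lra.
      assert (E: exp ((al + 1) * ln x) = exp (al * ln x) * x) by
        (rewrite Rmult_plus_distr_r, Rmult_1_l, exp_plus, exp_ln; lra).
      rewrite E. field. lra.
    - intros x Hx. rewrite Hmin, Hmax in Hx. apply (ex_derive_continuous (K:=R_AbsRing) (V := R_NormedModule)).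
      unfold g. auto_derive; try lra. }
  assert (Hge : ex_RInt g a b) by (eexists; eauto).
  assert (HI : RInt g a b = F b - F a) by (apply is_RInt_unique; exact Hg).
  assert (H1 : RInt f a b <= RInt g a b).
  { apply RInt_le; auto; try lra. intros x Hx.
    eapply Rle_trans. apply Rle_abs. apply Hb; lra. }
  assert (H2 : RInt (fun x => opp (g x)) a b <= RInt f a b).
  { apply RInt_le; auto; try lra. apply (ex_RInt_opp (V:=R_NormedModule)); auto. intros x Hx.
    specialize (Hb x ltac:(lra)). unfold opp; simpl. unfold g.
    apply Rabs_le_between in Hb. lra. }
  rewrite (RInt_opp (V:=R_CompleteNormedModule)) in H2 by auto. unfold opp in H2; simpl in H2.
  rewrite HI in H1; rewrite HI in H2. unfold F in H1, H2.
  replace (c * (exp ((al + 1) * ln b) - exp ((al + 1) * ln a)) / (al + 1))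
    with (c * exp ((al + 1) * ln b) / (al + 1) - c * exp ((al + 1) * ln a) / (al + 1))
    by (field; auto).
  apply Rabs_le. lra.
Qed.


Definition kk (p : R) := p / (p - 1).
Definition Lf N p t r := -(INR N - 1) * ln r - kk p * ln (beta_of N p * exp ((1 - xi_of N p) * ln r) + t).

Lemma is_derive_eq (f : R -> R) (x l1 l2 : R) : is_derive f x l1 -> @eq R l1 l2 -> is_derive f x l2.
Proof. intros; subst; auto. Qed.

Lemma params N p : (3 <= N)%nat -> INR N / (INR N - 1) < p -> p < 2 ->
  1 < p /\ 1 < xi_of N p /\ 0 < beta_of N p /\ 0 < sigma_of p /\ sigma_of p < INR N - 2
  /\ 3 <= INR N.
Proof.
  intros HN H1 H2.
  assert (HN3 : 3 <= INR N) by (replace 3 with (INR 3) by (simpl; lra); apply le_INR; auto).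
  assert (Hp : INR N < p * (INR N - 1)).
  { apply (Rmult_lt_compat_r (INR N - 1)) in H1; [|lra].
    unfold Rdiv in H1. rewrite Rmult_assoc, Rinv_l, Rmult_1_r in H1; lra. }
  assert (1 < p) by nra.
  assert (1 < xi_of N p) by (unfold xi_of; nra).
  unfold beta_of, sigma_of. repeat split; auto.
  - apply Rdiv_lt_0_compat; lra.
  - apply Rdiv_lt_0_compat; lra.
  - apply (Rmult_lt_reg_r (p - 1)); [lra|]. unfold Rdiv. rewrite Rmult_assoc, Rinv_l; nra.
Qed.

Lemma L_deriv N p t r : (3 <= N)%nat -> INR N / (INR N - 1) < p -> p < 2 -> 0 < t -> 0 < r ->
  is_derive (Lf N p t) r (-(INR N - 1)/r + p/(beta_of N p * r + t * Rpower r (xi_of N p))).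
Proof.
  intros HN H1 H2 Ht Hr.
  destruct (params N p HN H1 H2) as (Hp & Hxi & Hbe & _).
  assert (Hpos : forall y, 0 < beta_of N p * exp y + t).
  { intros y. pose proof (exp_pos y). nra. }
  unfold Lf. unfold Rpower. eapply is_derive_eq. auto_derive.
  - split; auto. split; auto.
  - 
    assert (EF : exp ((1 - xi_of N p) * ln r) * exp (xi_of N p * ln r) = r).
    { rewrite <- exp_plus. replace ((1 - xi_of N p) * ln r + xi_of N p * ln r) with (ln r) by ring.
      apply exp_ln; auto. }
    assert (Hk : kk p * beta_of N p * (xi_of N p - 1) = p).
    { unfold kk, beta_of. field. lra. }
    specialize (Hpos ((1 - xi_of N p) * ln r)).
    pose proof (exp_pos ((1 - xi_of N p) * ln r)).
    pose proof (exp_pos (xi_of N p * ln r)).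
    set (E := exp ((1 - xi_of N p) * ln r)) in *.
    set (F := exp (xi_of N p * ln r)) in *.
    set (K := kk p) in *. set (B := beta_of N p) in *. set (X := xi_of N p) in *.
    rewrite <- Hk. rewrite <- EF.
    field. repeat split; try lra. nra.
Qed.

Definition Lp N p t r := -(INR N - 1)/r + p/(beta_of N p * r + t * Rpower r (xi_of N p)).
Definition bt (b : R -> R) s := b (Rmin s 1).
Definition rho N p t := Rmin 1 (exp ((ln (beta_of N p) - ln t)/(xi_of N p - 1))).
Definition hf N p t b s := bt b s * exp (- Lf N p t s).
Definition uf N p t b r := exp (Lf N p t r) * RInt (hf N p t b) r (rho N p t).
Definition af N p t b r := RInt (uf N p t b) 1 r.

Lemma Rmin1_lip y s : Rabs (Rmin y 1 - Rmin s 1) <= Rabs (y - s).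
Proof. unfold Rmin; destruct (Rle_dec y 1); destruct (Rle_dec s 1);
  unfold Rabs; repeat match goal with |- context [Rcase_abs ?x] => destruct (Rcase_abs x) end; lra. Qed.

Lemma bt_cont b s : continuous_on_0_1 b -> 0 < s -> continuous (bt b) s.
Proof.
  intros Hb Hs. apply continuity_pt_filterlim.
  intros eps Heps.
  assert (Hm : 0 < Rmin s 1 <= 1).
  { split. apply Rmin_glb_lt; lra. apply Rmin_r. }
  destruct (Hb (Rmin s 1) Hm eps Heps) as (d & Hd & Hd2).
  exists (Rmin d s). split. apply Rmin_glb_lt; lra.
  intros y [_ Hy]. simpl in Hy. unfold R_dist in Hy. simpl. unfold R_dist, bt.
  assert (Hy1 : Rabs (y - s) < d) by (pose proof (Rmin_l d s); lra).
  assert (Hy2 : Rabs (y - s) < s) by (pose proof (Rmin_r d s); lra).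
  apply Hd2.
  - split. apply Rmin_glb_lt; try lra. apply Rabs_lt_between' in Hy2. lra. apply Rmin_r.
  - pose proof (Rmin1_lip y s). lra.
Qed.

Lemma L_cont N p t r : (3 <= N)%nat -> INR N / (INR N - 1) < p -> p < 2 -> 0 < t -> 0 < r ->
  continuous (Lf N p t) r.
Proof.
  intros. apply (ex_derive_continuous (K:=R_AbsRing) (V := R_NormedModule)).
  eexists. apply L_deriv; auto.
Qed.

Lemma hf_cont N p t b s : (3 <= N)%nat -> INR N / (INR N - 1) < p -> p < 2 -> 0 < t ->
  continuous_on_0_1 b -> 0 < s -> continuous (hf N p t b) s.
Proof.
  intros. unfold hf.
  apply (continuous_mult (K:=R_AbsRing) (bt b) (fun s => exp (- Lf N p t s))).
  apply bt_cont; auto.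
  apply (continuous_comp (Lf N p t) (fun y => exp (- y))).
  apply L_cont; auto.
  apply (ex_derive_continuous (K:=R_AbsRing) (V := R_NormedModule)). auto_derive. auto.
Qed.

Lemma hf_int N p t b x y : (3 <= N)%nat -> INR N / (INR N - 1) < p -> p < 2 -> 0 < t ->
  continuous_on_0_1 b -> 0 < x -> 0 < y -> ex_RInt (hf N p t b) x y.
Proof.
  intros. apply (ex_RInt_continuous (V:=R_CompleteNormedModule)). intros z Hz.
  apply hf_cont; auto.
  assert (0 < Rmin x y) by (apply Rmin_glb_lt; auto). lra.
Qed.

Lemma rho_pos N p t : 0 < rho N p t.
Proof. unfold rho. apply Rmin_glb_lt. lra. apply exp_pos. Qed.

Lemma rho_le1 N p t : rho N p t <= 1.
Proof. apply Rmin_l. Qed.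

Lemma locally_pos (P : R -> Prop) r : 0 < r -> (forall y, 0 < y -> P y) -> locally r P.
Proof.
  intros Hr HP. exists (mkposreal (r/2) ltac:(lra)). intros y Hy.
  change (Rabs (y - r) < r/2) in Hy. apply HP. apply Rabs_lt_between' in Hy. lra.
Qed.

Lemma uf_deriv N p t b r : (3 <= N)%nat -> INR N / (INR N - 1) < p -> p < 2 -> 0 < t ->
  continuous_on_0_1 b -> 0 < r ->
  is_derive (uf N p t b) r (Lp N p t r * uf N p t b r - bt b r).
Proof.
  intros HN H1 H2 Ht Hb Hr.
  unfold uf.
  eapply is_derive_eq.
  apply (is_derive_mult (fun r => exp (Lf N p t r)) (fun r => RInt (hf N p t b) r (rho N p t))).
  apply (is_derive_comp exp (Lf N p t)). apply is_derive_exp. apply L_deriv; auto.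
  apply (is_derive_RInt' (V:=R_CompleteNormedModule) (hf N p t b) (fun x => RInt (hf N p t b) x (rho N p t)) r (rho N p t)).
  apply locally_pos; auto. intros y Hy. apply (RInt_correct (V:=R_CompleteNormedModule)).
  apply hf_int; auto. apply rho_pos.
  apply hf_cont; auto.
  intros; apply Rmult_comm.
  unfold Lp. simpl. set (I := RInt (hf N p t b) r (rho N p t)). unfold hf. change mult with Rmult. change plus with Rplus.
  change opp with Ropp. change scal with Rmult.
  assert (E : exp (Lf N p t r) * exp (- Lf N p t r) = 1).
  { rewrite <- exp_plus. replace (Lf N p t r + - Lf N p t r) with 0 by ring. apply exp_0. }
  set (A := exp (Lf N p t r)) in *. set (B := exp (- Lf N p t r)) in *.
  transitivity ((-(INR N - 1)/r + p/(beta_of N p * r + t * Rpower r (xi_of N p))) * A * I + - bt b r * (A * B)).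
  ring. rewrite E. ring.
Qed.

Lemma uf_cont N p t b r : (3 <= N)%nat -> INR N / (INR N - 1) < p -> p < 2 -> 0 < t ->
  continuous_on_0_1 b -> 0 < r -> continuous (uf N p t b) r.
Proof.
  intros. apply (ex_derive_continuous (K:=R_AbsRing) (V := R_NormedModule)).
  eexists. apply uf_deriv; auto.
Qed.

Lemma uf_int N p t b x y : (3 <= N)%nat -> INR N / (INR N - 1) < p -> p < 2 -> 0 < t ->
  continuous_on_0_1 b -> 0 < x -> 0 < y -> ex_RInt (uf N p t b) x y.
Proof.
  intros. apply (ex_RInt_continuous (V:=R_CompleteNormedModule)). intros z Hz.
  apply uf_cont; auto.
  assert (0 < Rmin x y) by (apply Rmin_glb_lt; auto). lra.
Qed.

Lemma af_deriv N p t b r : (3 <= N)%nat -> INR N / (INR N - 1) < p -> p < 2 -> 0 < t ->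
  continuous_on_0_1 b -> 0 < r -> is_derive (af N p t b) r (uf N p t b r).
Proof.
  intros. unfold af.
  apply (is_derive_RInt (V:=R_CompleteNormedModule) (uf N p t b) (fun x => RInt (uf N p t b) 1 x) 1 r).
  apply locally_pos; auto. intros y Hy. apply (RInt_correct (V:=R_CompleteNormedModule)).
  apply uf_int; auto. lra.
  apply uf_cont; auto.
Qed.

Lemma cont_left (f : R -> R) x : continuous f x -> left_continuous_at f x.
Proof.
  intros H. apply continuity_pt_filterlim in H.
  intros eps Heps. destruct (H eps Heps) as (d & Hd & Hd2).
  exists d. split; auto. intros r Hr. apply (Hd2 r). split.
  split. exact I. lra. simpl. unfold R_dist. rewrite Rabs_left; lra.
Qed.

Definition KK p := exp (kk p * ln 2).

Lemma b_bound (b : R -> R) s sg : 0 < s -> exp ((sg + 2) * ln s) * Rabs (b s) <= 1 ->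
  Rabs (b s) <= exp (- (sg + 2) * ln s).
Proof.
  intros Hs H. replace (- (sg + 2) * ln s) with (- ((sg + 2) * ln s)) by ring.
  rewrite exp_Ropp. pose proof (exp_pos ((sg + 2) * ln s)).
  apply (Rmult_le_reg_l (exp ((sg + 2) * ln s))); auto.
  rewrite Rinv_r; lra.
Qed.

Lemma pw1 N p t b r s : (3 <= N)%nat -> INR N / (INR N - 1) < p -> p < 2 -> 0 < t ->
  0 < r <= s -> s <= 1 -> t <= beta_of N p * exp ((1 - xi_of N p) * ln s) ->
  exp ((sigma_of p + 2) * ln s) * Rabs (b s) <= 1 ->
  Rabs (hf N p t b s) <= KK p * exp (- Lf N p t r) * exp (- (sigma_of p + 2 - xi_of N p) * ln r)
      * exp (- xi_of N p * ln s).
Proof.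
  intros HN H1 H2 Ht Hrs Hs1 Hts Hb.
  destruct (params N p HN H1 H2) as (Hp & Hxi & Hbe & Hsg & _).
  unfold hf, bt. rewrite Rmin_left by lra.
  rewrite Rabs_mult, (Rabs_right (exp _)) by (left; apply exp_pos).
  apply b_bound in Hb; [|lra].
  eapply Rle_trans. apply Rmult_le_compat_r. left; apply exp_pos. exact Hb.
  unfold KK. rewrite <- !exp_plus. apply exp_le_mono.
  unfold Lf.
  set (ls := ln s) in *. set (lr := ln r) in *.
  set (X := xi_of N p) in *. set (B := beta_of N p) in *. set (k := kk p). set (sg := sigma_of p) in *.
  assert (Hk : 0 < k) by (unfold k, kk; apply Rdiv_lt_0_compat; lra).
  assert (HEs := exp_pos ((1 - X) * ls)). assert (HEr := exp_pos ((1 - X) * lr)).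
  assert (Ds : ln (B * exp ((1 - X) * ls) + t) <= ln 2 + ln B + (1 - X) * ls).
  { rewrite <- (ln_exp ((1 - X) * ls)) at 2. rewrite <- !ln_mult; try lra.
    apply ln_le; nra. }
  assert (Dr : ln B + (1 - X) * lr <= ln (B * exp ((1 - X) * lr) + t)).
  { rewrite <- (ln_exp ((1 - X) * lr)) at 1. rewrite <- !ln_mult; try lra.
    apply ln_le. nra. lra. }
  assert (Q : - (sg + 2) + (INR N - 1) + k * (1 - X) + X = 0).
  { unfold sg, k, X, sigma_of, kk, xi_of. field. lra. }
  assert (k * (ln 2 + ln B + (1 - X) * ls - ln (B * exp ((1 - X) * ls) + t)) >= 0) by nra.
  assert (k * (ln (B * exp ((1 - X) * lr) + t) - ln B - (1 - X) * lr) >= 0) by nra.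
  assert (ls * (- (sg + 2) + (INR N - 1) + k * (1 - X) + X) = 0) by (rewrite Q; ring).
  assert (lr * (- (sg + 2) + (INR N - 1) + k * (1 - X) + X) = 0) by (rewrite Q; ring).
  nra.
Qed.

Lemma pw2 N p t b r s : (3 <= N)%nat -> INR N / (INR N - 1) < p -> p < 2 -> 0 < t ->
  0 < s <= r -> r <= 1 -> beta_of N p * exp ((1 - xi_of N p) * ln s) <= t ->
  beta_of N p * exp ((1 - xi_of N p) * ln r) <= t ->
  exp ((sigma_of p + 2) * ln s) * Rabs (b s) <= 1 ->
  Rabs (hf N p t b s) <= KK p * exp (- Lf N p t r) * exp (- (INR N - 1) * ln r)
      * exp ((INR N - 3 - sigma_of p) * ln s).
Proof.
  intros HN H1 H2 Ht Hrs Hs1 Hts Htr Hb.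
  destruct (params N p HN H1 H2) as (Hp & Hxi & Hbe & Hsg & _).
  unfold hf, bt. rewrite Rmin_left by lra.
  rewrite Rabs_mult, (Rabs_right (exp _)) by (left; apply exp_pos).
  apply b_bound in Hb; [|lra].
  eapply Rle_trans. apply Rmult_le_compat_r. left; apply exp_pos. exact Hb.
  unfold KK. rewrite <- !exp_plus. apply exp_le_mono.
  unfold Lf.
  set (ls := ln s) in *. set (lr := ln r) in *.
  set (X := xi_of N p) in *. set (B := beta_of N p) in *. set (k := kk p). set (sg := sigma_of p).
  assert (Hk : 0 < k) by (unfold k, kk; apply Rdiv_lt_0_compat; lra).
  assert (HEs := exp_pos ((1 - X) * ls)). assert (HEr := exp_pos ((1 - X) * lr)).
  assert (Ds : ln (B * exp ((1 - X) * ls) + t) <= ln 2 + ln t).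
  { rewrite <- ln_mult; try lra. apply ln_le. nra. lra. }
  assert (Dr : ln t <= ln (B * exp ((1 - X) * lr) + t)).
  { apply ln_le. lra. nra. }
  assert (k * (ln 2 + ln t - ln (B * exp ((1 - X) * ls) + t)) >= 0) by nra.
  assert (k * (ln (B * exp ((1 - X) * lr) + t) - ln t) >= 0) by nra.
  nra.
Qed.

Definition MM N p := 1 / (xi_of N p - 1) + 1 / (INR N - 2 - sigma_of p).

Lemma lnP_facts N p t s : (3 <= N)%nat -> INR N / (INR N - 1) < p -> p < 2 -> 0 < t -> 0 < s ->
  (ln s <= (ln (beta_of N p) - ln t)/(xi_of N p - 1) -> t <= beta_of N p * exp ((1 - xi_of N p) * ln s)) /\
  ((ln (beta_of N p) - ln t)/(xi_of N p - 1) <= ln s -> beta_of N p * exp ((1 - xi_of N p) * ln s) <= t).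
Proof.
  intros HN H1 H2 Ht Hs.
  destruct (params N p HN H1 H2) as (Hp & Hxi & Hbe & Hsg & _).
  set (X := xi_of N p) in *. set (B := beta_of N p) in *.
  assert (E : B * exp ((1 - X) * ((ln B - ln t) / (X - 1))) = t).
  { replace ((1 - X) * ((ln B - ln t) / (X - 1))) with (ln t + - ln B) by (field; lra).
    rewrite exp_plus, exp_Ropp, !exp_ln by lra. field. lra. }
  split; intros H.
  - rewrite <- E. apply Rmult_le_compat_l. lra. apply exp_le_mono.
    apply Rmult_le_compat_neg_l; lra.
  - rewrite <- E. apply Rmult_le_compat_l. lra. apply exp_le_mono.
    apply Rmult_le_compat_neg_l; lra.
Qed.

Lemma exp_mul_exp a c : exp a * exp c = exp (a + c).
Proof. rewrite exp_plus; auto. Qed.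

Lemma u_bound N p t b r : (3 <= N)%nat -> INR N / (INR N - 1) < p -> p < 2 -> 0 < t ->
  continuous_on_0_1 b ->
  (forall s, 0 < s <= 1 -> Rpower s (sigma_of p + 2) * Rabs (b s) <= 1) ->
  0 < r <= 1 ->
  Rabs (uf N p t b r) <= KK p * MM N p * exp (- (sigma_of p + 1) * ln r).
Proof.
  intros HN H1 H2 Ht Hc Hb Hr.
  destruct (params N p HN H1 H2) as (Hp & Hxi & Hbe & Hsg & HsN & HN3).
  assert (HK : 0 < KK p) by apply exp_pos.
  assert (HM1 : 0 < 1 / (INR N - 2 - sigma_of p)) by (apply Rdiv_lt_0_compat; lra).
  assert (HM2 : 0 < 1 / (xi_of N p - 1)) by (apply Rdiv_lt_0_compat; lra).
  pose proof (rho_pos N p t) as Hrho. pose proof (rho_le1 N p t) as Hrho1.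
  unfold uf. rewrite Rabs_mult, (Rabs_right (exp _)) by (left; apply exp_pos).
  set (lr := ln r). set (X := xi_of N p). set (sg := sigma_of p).
  set (lP := (ln (beta_of N p) - ln t) / (xi_of N p - 1)).
  assert (HrhoP : rho N p t <= exp lP) by apply Rmin_r.
  destruct (Rle_lt_dec r (rho N p t)) as [Hc1|Hc2].
  -
    set (c := KK p * exp (- Lf N p t r) * exp (- (sg + 2 - X) * lr)).
    assert (Hcpos : 0 <= c) by (unfold c; repeat apply Rmult_le_pos; try lra; left; apply exp_pos).
    assert (HI := int_pow_bound (hf N p t b) r (rho N p t) c (- X) ltac:(lra) Hcpos ltac:(unfold X; lra)
       ltac:(apply hf_int; auto; lra)).
    assert (HI' : Rabs (RInt (hf N p t b) r (rho N p t)) <=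
      c * (exp ((- X + 1) * ln (rho N p t)) - exp ((- X + 1) * ln r)) / (- X + 1)).
    { apply HI. intros s Hs.
      eapply Rle_trans. apply (pw1 N p t b r s); auto; try lra.
      apply (proj1 (lnP_facts N p t s HN H1 H2 Ht ltac:(lra))).
      fold lP. rewrite <- (ln_exp lP). apply ln_le; lra.
      apply (Hb s); lra.
      right. unfold c, X, lr, sg. ring_simplify. auto. }
    clear HI.
    assert (Hneg : c * (exp ((- X + 1) * ln (rho N p t)) - exp ((- X + 1) * ln r)) / (- X + 1)
                   <= c * exp ((- X + 1) * ln r) / (X - 1)).
    { pose proof (exp_pos ((- X + 1) * ln (rho N p t))).
      replace (c * (exp ((- X + 1) * ln (rho N p t)) - exp ((- X + 1) * ln r)) / (- X + 1))
        with (c * exp ((- X + 1) * ln r) / (X - 1) - c * exp ((- X + 1) * ln (rho N p t)) / (X - 1))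
        by (field; unfold X; lra).
      assert (0 <= c * exp ((- X + 1) * ln (rho N p t)) / (X - 1)).
      { apply Rdiv_le_0_compat. apply Rmult_le_pos; lra. unfold X; lra. }
      lra. }
    assert (Hfin : exp (Lf N p t r) * (c * exp ((- X + 1) * ln r) / (X - 1))
                   = KK p * (1 / (X - 1)) * exp (- (sg + 1) * lr)).
    { unfold c. unfold Rdiv.
      replace (exp (Lf N p t r) * (KK p * exp (- Lf N p t r) * exp (- (sg + 2 - X) * lr) * exp ((- X + 1) * ln r) * / (X - 1)))
        with (KK p * / (X - 1) * (exp (Lf N p t r) * exp (- Lf N p t r) * exp (- (sg + 2 - X) * lr) * exp ((- X + 1) * lr))) by (unfold lr; ring).
      rewrite !exp_mul_exp. f_equal. ring. f_equal. ring. }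
    eapply Rle_trans. apply Rmult_le_compat_l. left; apply exp_pos. apply (Rle_trans _ _ _ HI' Hneg).
    rewrite Hfin. unfold MM. fold X sg.
    apply Rmult_le_compat_r. left; apply exp_pos.
    apply Rmult_le_compat_l. lra. fold X sg in HM1, HM2. lra.
  -
    assert (HrP : rho N p t = exp lP).
    { destruct (Rle_lt_dec 1 (exp lP)) as [Hq|Hq].
      - assert (rho N p t = 1) by (apply Rmin_left; auto). lra.
      - apply Rmin_right. lra. }
    set (c := KK p * exp (- Lf N p t r) * exp (- (INR N - 1) * lr)).
    assert (Hcpos : 0 <= c) by (unfold c; repeat apply Rmult_le_pos; try lra; left; apply exp_pos).
    assert (HI := int_pow_bound (hf N p t b) (rho N p t) r c (INR N - 3 - sg) ltac:(lra) Hcpos ltac:(unfold sg; lra)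
       ltac:(apply hf_int; auto; lra)).
    assert (HI' : Rabs (RInt (hf N p t b) (rho N p t) r) <=
      c * (exp ((INR N - 3 - sg + 1) * ln r) - exp ((INR N - 3 - sg + 1) * ln (rho N p t))) / (INR N - 3 - sg + 1)).
    { apply HI. intros s Hs.
      assert (HlP : lP <= ln s) by (rewrite <- (ln_exp lP); apply ln_le; [apply exp_pos|lra]).
      assert (HlP' : lP <= ln r) by (rewrite <- (ln_exp lP); apply ln_le; [apply exp_pos|lra]).
      apply (pw2 N p t b r s); auto; try lra.
      apply (proj2 (lnP_facts N p t s HN H1 H2 Ht ltac:(lra))); auto.
      apply (proj2 (lnP_facts N p t r HN H1 H2 Ht ltac:(lra))); auto.
      apply (Hb s); lra. }
    clear HI.
    rewrite <- (opp_RInt_swap (V:=R_CompleteNormedModule)) by (apply hf_int; auto; lra).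
    change (opp ?x) with (Ropp x). rewrite Rabs_Ropp.
    assert (Hneg : c * (exp ((INR N - 3 - sg + 1) * ln r) - exp ((INR N - 3 - sg + 1) * ln (rho N p t))) / (INR N - 3 - sg + 1)
                   <= c * exp ((INR N - 3 - sg + 1) * ln r) / (INR N - 2 - sg)).
    { replace (INR N - 3 - sg + 1) with (INR N - 2 - sg) by ring.
      pose proof (exp_pos ((INR N - 2 - sg) * ln (rho N p t))).
      unfold Rdiv. apply Rmult_le_compat_r. left; apply Rinv_0_lt_compat; unfold sg; lra.
      apply Rmult_le_compat_l; lra. }
    assert (Hfin : exp (Lf N p t r) * (c * exp ((INR N - 3 - sg + 1) * ln r) / (INR N - 2 - sg))
                   = KK p * (1 / (INR N - 2 - sg)) * exp (- (sg + 1) * lr)).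
    { unfold c. unfold Rdiv.
      replace (exp (Lf N p t r) * (KK p * exp (- Lf N p t r) * exp (- (INR N - 1) * lr) * exp ((INR N - 3 - sg + 1) * ln r) * / (INR N - 2 - sg)))
        with (KK p * / (INR N - 2 - sg) * (exp (Lf N p t r) * exp (- Lf N p t r) * exp (- (INR N - 1) * lr) * exp ((INR N - 3 - sg + 1) * lr))) by (unfold lr; ring).
      rewrite !exp_mul_exp. f_equal. ring. f_equal. ring. }
    eapply Rle_trans. apply Rmult_le_compat_l. left; apply exp_pos. apply (Rle_trans _ _ _ HI' Hneg).
    rewrite Hfin. unfold MM. fold X sg.
    apply Rmult_le_compat_r. left; apply exp_pos.
    apply Rmult_le_compat_l. lra. fold X sg in HM1, HM2. lra.
Qed.

Lemma a_bound N p t b r : (3 <= N)%nat -> INR N / (INR N - 1) < p -> p < 2 -> 0 < t ->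
  continuous_on_0_1 b ->
  (forall s, 0 < s <= 1 -> Rpower s (sigma_of p + 2) * Rabs (b s) <= 1) ->
  0 < r <= 1 ->
  Rabs (af N p t b r) <= KK p * MM N p * exp (- sigma_of p * ln r) / sigma_of p.
Proof.
  intros HN H1 H2 Ht Hc Hb Hr.
  destruct (params N p HN H1 H2) as (Hp & Hxi & Hbe & Hsg & HsN & HN3).
  assert (HK : 0 < KK p) by apply exp_pos.
  assert (HM1 : 0 < 1 / (INR N - 2 - sigma_of p)) by (apply Rdiv_lt_0_compat; lra).
  assert (HM2 : 0 < 1 / (xi_of N p - 1)) by (apply Rdiv_lt_0_compat; lra).
  assert (HMM : 0 < MM N p) by (unfold MM; lra).
  unfold af.
  rewrite <- (opp_RInt_swap (V:=R_CompleteNormedModule)) by (apply uf_int; auto; lra).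
  change (opp ?x) with (Ropp x). rewrite Rabs_Ropp.
  assert (HI := int_pow_bound (uf N p t b) r 1 (KK p * MM N p) (- (sigma_of p + 1)) ltac:(lra)
    ltac:(apply Rmult_le_pos; lra) ltac:(lra) ltac:(apply uf_int; auto; lra)
    ltac:(intros s Hs; apply u_bound; auto; lra)).
  eapply Rle_trans. exact HI.
  rewrite ln_1, Rmult_0_r, exp_0.
  replace (- (sigma_of p + 1) + 1) with (- sigma_of p) by ring.
  pose proof (exp_pos (- sigma_of p * ln r)).
  replace (KK p * MM N p * (1 - exp (- sigma_of p * ln r)) / - sigma_of p) with
    (KK p * MM N p * exp (- sigma_of p * ln r) / sigma_of p - KK p * MM N p / sigma_of p)
    by (field; lra).
  assert (0 <= KK p * MM N p / sigma_of p) by (apply Rdiv_le_0_compat; [apply Rmult_le_pos|]; lra).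
  lra.
Qed.

Theorem lemma2p7 (N : nat) (p : R) :
  (3 <= N)%nat ->
  INR N / (INR N - 1) < p -> p < 2 ->
  exists C : R, 0 < C /\
    forall (t : R) (b : R -> R),
      0 < t ->
      continuous_on_0_1 b ->
      (forall r, 0 < r <= 1 -> Rpower r (sigma_of p + 2) * Rabs (b r) <= 1) ->
      exists a da : R -> R,
        is_solution N p t b a da /\
        (forall r, 0 < r <= 1 ->
           Rpower r (sigma_of p) * Rabs (a r)
           + Rpower r (sigma_of p + 1) * Rabs (da r) <= C).
Proof.
  intros HN H1 H2.
  destruct (params N p HN H1 H2) as (Hp & Hxi & Hbe & Hsg & HsN & HN3).
  assert (HK : 0 < KK p) by apply exp_pos.
  assert (HM1 : 0 < 1 / (INR N - 2 - sigma_of p)) by (apply Rdiv_lt_0_compat; lra).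
  assert (HM2 : 0 < 1 / (xi_of N p - 1)) by (apply Rdiv_lt_0_compat; lra).
  assert (HMM : 0 < MM N p) by (unfold MM; lra).
  assert (HKM : 0 < KK p * MM N p) by (apply Rmult_lt_0_compat; lra).
  exists (KK p * MM N p / sigma_of p + KK p * MM N p). split.
  { assert (0 < KK p * MM N p / sigma_of p) by (apply Rdiv_lt_0_compat; lra). lra. }
  intros t b Ht Hc Hb.
  exists (af N p t b), (uf N p t b). split.
  - split; [|split; [|split]].
    + intros r Hr. split.
      * apply is_derive_Reals. apply af_deriv; auto; lra.
      * exists (Lp N p t r * uf N p t b r - bt b r). split.
        apply is_derive_Reals. apply uf_deriv; auto; lra.
        unfold Lp, bt. rewrite Rmin_left by lra. unfold Rdiv. ring.
    + unfold af. apply (RInt_point (V:=R_CompleteNormedModule)).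
    + apply cont_left. apply (ex_derive_continuous (K:=R_AbsRing) (V := R_NormedModule)).
      eexists. apply af_deriv; auto; lra.
    + apply cont_left. apply uf_cont; auto; lra.
  - intros r Hr.
    pose proof (a_bound N p t b r HN H1 H2 Ht Hc Hb Hr) as Ha.
    pose proof (u_bound N p t b r HN H1 H2 Ht Hc Hb Hr) as Hu.
    unfold Rpower.
    assert (E1 : exp (sigma_of p * ln r) * (KK p * MM N p * exp (- sigma_of p * ln r) / sigma_of p)
               = KK p * MM N p / sigma_of p).
    { unfold Rdiv. replace (exp (sigma_of p * ln r) * (KK p * MM N p * exp (- sigma_of p * ln r) * / sigma_of p))
        with (KK p * MM N p * / sigma_of p * (exp (sigma_of p * ln r) * exp (- sigma_of p * ln r))) by ring.
      rewrite exp_mul_exp. replace (sigma_of p * ln r + - sigma_of p * ln r) with 0 by ring.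
      rewrite exp_0. ring. }
    assert (E2 : exp ((sigma_of p + 1) * ln r) * (KK p * MM N p * exp (- (sigma_of p + 1) * ln r))
               = KK p * MM N p).
    { replace (exp ((sigma_of p + 1) * ln r) * (KK p * MM N p * exp (- (sigma_of p + 1) * ln r)))
        with (KK p * MM N p * (exp ((sigma_of p + 1) * ln r) * exp (- (sigma_of p + 1) * ln r))) by ring.
      rewrite exp_mul_exp. replace ((sigma_of p + 1) * ln r + - (sigma_of p + 1) * ln r) with 0 by ring.
      rewrite exp_0. ring. }
    assert (A1 : exp (sigma_of p * ln r) * Rabs (af N p t b r) <= KK p * MM N p / sigma_of p).
    { rewrite <- E1. apply Rmult_le_compat_l; [left; apply exp_pos|auto]. }
    assert (A2 : exp ((sigma_of p + 1) * ln r) * Rabs (uf N p t b r) <= KK p * MM N p).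
    { rewrite <- E2. apply Rmult_le_compat_l; [left; apply exp_pos|auto]. }
    lra.
Qed.
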